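(* Consider a fair allocation instance with agents $a_1,\dots,a_n$, a set $M$ of $m$ goods, binary XOS valuations $v_i$ accessed through a value oracle answering $v_i(S)$ in $O(1)$ time, and entitlements $b_i>0$. Consider the following algorithm. Initialize $s_i=\lfloor b_i m\rfloor$ for all $i$. Repeat: sort the agents so that $\frac{\lceil s_1/2\rceil}{b_1}\le\cdots\le\frac{\lceil s_n/2\rceil}{b_n}$; set $R\gets M$; for $i=1,\dots,n$ in this order, if $v_i(R)\ge\lceil s_i/2\rceil$ then give $a_i$ a bundle $A_i\subseteq R$ with $v_i(A_i)=|A_i|=\lceil s_i/2\rceil$ (computed by extracting a non-wasteful subset, which can be done in $O(m)$ time) and set $R\gets R\setminus A_i$; otherwise set $s_i\gets s_i-1$ and start the next repetition. If all $n$ agents received bundles, allocate $R$ arbitrarily and return the allocation. This algorithm runs in time $O(mn(m+\log n))$.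
   Context: A valuation $v:2^M\to\mathbb{R}_{\ge0}$ is XOS if there is a finite collection of additive functions $\{\ell_t\}_t$ with nonnegative item values such that $v(S)=\max_t\ell_t(S)$. It has binary marginals if $v(\varnothing)=0$ and $v(S\cup\{g\})-v(S)\in\{0,1\}$ for all $S,g$; ''binary XOS'' means XOS with binary marginals. A set $S$ is non-wasteful for $v$ if $v(S)=|S|$. For a binary XOS $v$ and any set $T$, a non-wasteful subset $X\subseteq T$ with $|X|=k$ for any given $k\le v(T)$ can be computed in $O(m)$ time (this is taken as a primitive in the running-time accounting). *)

(* Defs.v *)
From mathcomp Require Import all_boot all_order all_algebra.
Set Implicit Arguments. Unset Strict Implicit. Unset Printing Implicit Defensive.
Import Order.TTheory GRing.Theory Num.Theory.
Local Open Scope ring_scope.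

(* Valuations: agents are 'I_n, goods are 'I_m (M = [set: 'I_m]).       *)
(* A valuation with binary marginals takes values in nat (v(empty)=0 and *)
(* all marginals are 0/1), so valuations are typed {set 'I_m} -> nat.   *)

Definition binary_marginals (m : nat) (v : {set 'I_m} -> nat) : Prop :=
  v set0 = 0%N /\
  forall (S : {set 'I_m}) (g : 'I_m),
    v (g |: S) = v S \/ v (g |: S) = (v S).+1.

Definition XOS (R : realDomainType) (m : nat) (v : {set 'I_m} -> nat) : Prop :=
  exists L : seq {ffun 'I_m -> R},
    L != [::] /\
    (forall l, l \in L -> forall g, 0 <= l g) /\
    forall S : {set 'I_m},
      (v S)%:R = \big[Num.max/0]_(l <- L) \sum_(g in S) l g.

Definition binary_XOS (R : realDomainType) (m : nat) (v : {set 'I_m} -> nat) :=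
  XOS R v /\ binary_marginals v.

(* The algorithm, with an explicit cost model.                          *)
(*  - a value-oracle query v_i(S) costs 1;                              *)
(*  - extracting a non-wasteful subset of size k of a set costs m;      *)
(*  - any elementary set operation on subsets of M (R <- M, R <- R\A_i, *)
(*    giving the rest of R away) costs m;                               *)
(*  - computing the n keys / n initial values s_i costs n;              *)
(*  - sorting n keys costs n * (floor(log2 n) + 1) (comparison sort).   *)
(* Nondeterministic choices (tie-breaking in the sort, which            *)
(* non-wasteful subset is extracted) are resolved by arbitrary policies *)
(* [order] and [pick], which are universally quantified in the theorem. *)

Definition sort_cost (n : nat) : nat := (n * (trunc_log 2 n).+1)%N.

Section Algorithm.
Variables (R : archiRealFieldType) (n m : nat).
Variable v : 'I_n -> {set 'I_m} -> nat.
Variable b : 'I_n -> R.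

Definition s_init : {ffun 'I_n -> nat} := [ffun i => `|Num.floor (b i * m%:R)|%N].

(* sorting key  ceil(s_i/2) / b_i  (uphalf s = ceil(s/2)) *)
Definition key (s : {ffun 'I_n -> nat}) (i : 'I_n) : R := (uphalf (s i))%:R / b i.

Definition valid_order (order : {ffun 'I_n -> nat} -> seq 'I_n) : Prop :=
  forall s, perm_eq (order s) (enum 'I_n) /\
            sorted (fun i j => key s i <= key s j) (order s).

Definition valid_pick (pick : 'I_n -> {set 'I_m} -> nat -> {set 'I_m}) : Prop :=
  forall i T k, (k <= v i T)%N ->
    [/\ pick i T k \subset T, #|pick i T k| = k & v i (pick i T k) = k].

Variable order : {ffun 'I_n -> nat} -> seq 'I_n.
Variable pick : 'I_n -> {set 'I_m} -> nat -> {set 'I_m}.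

(* Result: inl (i, cost) if agent i failed (then s_i is decremented and a new
   repetition starts); inr (A, R, cost) if every agent received a bundle. *)
Fixpoint pass (s : {ffun 'I_n -> nat}) (ord : seq 'I_n) (Rm : {set 'I_m})
    (A : {ffun 'I_n -> {set 'I_m}}) (c : nat)
    : ('I_n * nat) + ({ffun 'I_n -> {set 'I_m}} * {set 'I_m} * nat) :=
  match ord with
  | [::] => inr (A, Rm, c)
  | i :: ord' =>
      let k := uphalf (s i) in
      if (k <= v i Rm)%N then
        let Ai := pick i Rm k in
        pass s ord' (Rm :\: Ai) (finfun (fun j => if j == i then Ai else A j))
             (c + 1 + m + m)%N
      else inl (i, (c + 1)%N)
  end.

(* The outer repeat-loop, run with [fuel] repetitions at most; returns None
   if the fuel is exhausted before the algorithm returns. *)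
Fixpoint loop (fuel : nat) (s : {ffun 'I_n -> nat}) (c : nat)
    : option ({ffun 'I_n -> {set 'I_m}} * {set 'I_m} * nat) :=
  match fuel with
  | 0 => None
  | fuel'.+1 =>
      let c1 := (c + n + sort_cost n + m)%N in
      match pass s (order s) [set: 'I_m] [ffun => set0] c1 with
      | inl (i, c2) =>
          loop fuel' (finfun (fun j => if j == i then (s j).-1 else s j)) c2
      | inr (A, Rm, c2) => Some (A, Rm, (c2 + m)%N)
      end
  end.

(* Full run: initialization (cost n) then the loop.  The result is the
   bundles A_i, the leftover R (allocated arbitrarily, cost m charged), and
   the total cost. *)
Definition run (fuel : nat) := loop fuel s_init n.

End Algorithm.

(* Main.v *)
Require Import Defs.
From mathcomp Require Import all_boot all_order all_algebra.
From mathcomp Require Import zify.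
Import Order.TTheory GRing.Theory Num.Theory.
Local Open Scope ring_scope.

Section Aux.
Variables (R : archiRealFieldType) (n m : nat).
Variable v : 'I_n -> {set 'I_m} -> nat.
Variable b : 'I_n -> R.
Variable order : {ffun 'I_n -> nat} -> seq 'I_n.
Variable pick : 'I_n -> {set 'I_m} -> nat -> {set 'I_m}.

Lemma pass_inl {s ord Rm A c i c2} :
  pass v pick s ord Rm A c = inl (i, c2) ->
  (0 < s i)%N /\ (c2 <= c + size ord * (1 + m + m))%N.
Proof.
elim: ord Rm A c => [|j ord IH] Rm A c //=.
case: ifP => Hk.
  move=> /IH [Hs Hc]; split => //; lia.
case=> <- <-; split; last lia.
case: (s j) Hk => //.
Qed.

Lemma pass_inr {s ord Rm A c A' Rm' c2} :
  pass v pick s ord Rm A c = inr (A', Rm', c2) ->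
  (c2 <= c + size ord * (1 + m + m))%N.
Proof.
elim: ord Rm A c => [|j ord IH] Rm A c /=; first by case=> _ _ <-; lia.
case: ifP => Hk //.
move=> /IH Hc; lia.
Qed.

Definition K := (n + sort_cost n + m + n * (1 + m + m))%N.

Lemma loop_ok : valid_order b order -> forall fuel (s : {ffun 'I_n -> nat}) c,
  (\sum_i s i < fuel)%N ->
  exists A Rm cost, loop v order pick fuel s c = Some (A, Rm, cost) /\
    (cost <= c + (\sum_i s i).+1 * K + m)%N.
Proof.
move=> Hord; elim=> [|fuel IH] s c //= Hf.
have Hsz : size (order s) = n.
  by case: (Hord s) => /perm_size -> _; rewrite size_enum_ord.
case E: (pass _ _ _ _ _ _ _) => [[i c2]|[[A Rm] c2]].
  have [Hs Hc] := pass_inl E.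
  rewrite Hsz in Hc.
  set s' := finfun _.
  have Hsum : (\sum_j s j = (\sum_j s' j).+1)%N.
    rewrite (bigD1 i) //= [X in _ = X.+1](bigD1 i) //= /s' ffunE eqxx.
    rewrite -addSn prednK //; congr (_ + _)%N.
    by apply: eq_bigr => j Hj; rewrite ffunE (negbTE Hj).
  have Hlt : (\sum_j s' j < fuel)%N by rewrite Hsum ltnS in Hf.
  have [A [Rm [cost [H1 H2]]]] := IH s' c2 Hlt.
  exists A, Rm, cost; split => //.
  have HK : (c2 <= c + K)%N by rewrite /K; lia.
  rewrite Hsum; apply: leq_trans H2 _; apply: leq_add => //; rewrite [in X in (_ <= X)%N]mulSn addnA; apply: leq_add => //; exact: leqnn.
have Hc := pass_inr E; rewrite Hsz in Hc.
exists A, Rm, (c2 + m)%N; split => //.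
have HK : (c2 <= c + K)%N by rewrite /K; lia.
nia.
Qed.

Lemma sinit_le : (forall i, 0 < b i) -> \sum_(i < n) b i = 1 ->
  (\sum_i s_init m b i <= m)%N.
Proof.
move=> Hb Hs.
rewrite -(ler_nat R) natr_sum.
apply: le_trans (_ : \sum_i b i * m%:R <= _).
  apply: ler_sum => i _; rewrite ffunE natr_absz ger0_norm; last first.
    by rewrite floor_ge0 mulr_ge0 // ltW.
  exact: floor_le.
by rewrite -mulr_suml Hs mul1r.
Qed.

End Aux.

Theorem lemma2 :
  exists C : nat,
  forall (R : archiRealFieldType) (n m : nat)
         (v : 'I_n -> {set 'I_m} -> nat) (b : 'I_n -> R),
    (0 < m)%N ->
    (forall i, binary_XOS R (v i)) ->
    (forall i, 0 < b i) ->
    \sum_(i < n) b i = 1 ->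
  forall (order : {ffun 'I_n -> nat} -> seq 'I_n)
         (pick : 'I_n -> {set 'I_m} -> nat -> {set 'I_m}),
    valid_order b order ->
    valid_pick v pick ->
  exists (fuel : nat) (A : {ffun 'I_n -> {set 'I_m}}) (Rm : {set 'I_m}) (cost : nat),
    run v b order pick fuel = Some (A, Rm, cost) /\
    (cost <= C * (m * n * (m + trunc_log 2 n)))%N.
Proof.
exists 20%N => R n m v b Hm _ Hb Hs order pick Hord _.
have Hn : (0 < n)%N.
  rewrite lt0n; apply/eqP => n0; move: Hs.
  rewrite big_pred0; last by move=> i; have := ltn_ord i; move: (nat_of_ord i); rewrite n0.
  by move/eqP; rewrite eq_sym oner_eq0.
have Hi := @sinit_le R n m b Hb Hs.
have [A [Rm [cost [H1 H2]]]] :=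
  @loop_ok R n m v b order pick Hord (\sum_i s_init m b i).+1 (s_init m b) n (ltnSn _).
exists (\sum_i s_init m b i).+1, A, Rm, cost; split => //.
move: H2; rewrite /K /sort_cost.
set L := trunc_log 2 n; set S := (\sum_i _)%N => H2.
have HS : (S.+1 * (n + n * L.+1 + m + n * (1 + m + m)) <=
           (m + m) * (6 * (n * (m + L))))%N.
  apply: leq_mul; first lia.
  have h1 : (n <= n * m)%N by rewrite leq_pmulr.
  have h2 : (m <= n * m)%N by rewrite leq_pmull.
  rewrite mulnS !mulnDr muln1; lia.
have h3 : (n + m <= 2 * (m * n))%N.
  have h1 : (n <= m * n)%N by rewrite leq_pmull.
  have h2 : (m <= m * n)%N by rewrite leq_pmulr.
  lia.
have h4 : (m * n <= m * n * (m + L))%N by rewrite leq_pmulr // addn_gt0 Hm.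
have e : ((m + m) * (6 * (n * (m + L))) = 12 * (m * n * (m + L)))%N by nia.
rewrite e in HS.
have hS : (S.+1 <= m + m)%N by lia.
move: HS H2 h3 h4 hS.
move: (n + n * L.+1 + m + n * (1 + m + m))%N => KK.
move: (m * n * (m + L))%N => P.
move: (m * n)%N => Q.
move=> HS H2 h3 h4 hS.
lia.
Qed.
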